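(* Let $S$ be an AG-groupoid with a left identity. If $B$ is a bi-ideal of $S$ with $B^{2}=B$, then $B$ is a (two-sided) ideal of $S$, i.e. $SB\subseteq B$ and $BS\subseteq B$.
   Context: An AG-groupoid is a set $S$ with a binary operation satisfying $(ab)c=(cb)a$ for all $a,b,c\in S$. A left identity is an element $e$ with $ea=a$ for all $a\in S$. For nonempty subsets, $AB=\{ab:a\in A,b\in B\}$, $B^{2}=BB$. A bi-ideal of $S$ is a nonempty subset $B$ with $BB\subseteq B$ and $(BS)B\subseteq B$. *)

(* Defs.v *)
Set Implicit Arguments.

Definition left_invertive (S : Type) (op : S -> S -> S) : Prop :=
  forall a b c : S, op (op a b) c = op (op c b) a.

Definition left_identity (S : Type) (op : S -> S -> S) (e : S) : Prop :=
  forall a : S, op e a = a.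

Definition setmul (S : Type) (op : S -> S -> S) (A B : S -> Prop) : S -> Prop :=
  fun x => exists a b, A a /\ B b /\ x = op a b.

Definition subset (S : Type) (A B : S -> Prop) : Prop := forall x, A x -> B x.

Definition set_eq (S : Type) (A B : S -> Prop) : Prop := subset A B /\ subset B A.

Definition setT (S : Type) : S -> Prop := fun _ => True.

Definition bi_ideal (S : Type) (op : S -> S -> S) (B : S -> Prop) : Prop :=
  (exists b, B b) /\
  subset (setmul op B B) B /\
  subset (setmul op (setmul op B (@setT S)) B) B.

(* Main.v *)
Require Import Defs.

Theorem lemma1 (S : Type) (op : S -> S -> S) (e : S)
  (hAG : left_invertive op) (he : left_identity op e)
  (B : S -> Prop) (hB : bi_ideal op B)
  (hB2 : set_eq (setmul op B B) B) :
  subset (setmul op (@setT S) B) B /\ subset (setmul op B (@setT S)) B.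
Proof.
  destruct hB as [_ [HBB HBSB]].
  destruct hB2 as [_ Hsplit].
  assert (med : forall a b c d, op (op a b) (op c d) = op (op a c) (op b d)).
  { intros a b c d. rewrite hAG. rewrite (hAG c d b). rewrite hAG. reflexivity. }
  assert (perm : forall a b c, op a (op b c) = op b (op a c)).
  { intros a b c. pose proof (med e a b c) as M. rewrite !he in M. exact M. }
  assert (HSB : forall s b, B b -> B (op s b)).
  { intros s b Hb.
    destruct (Hsplit b Hb) as [b1 [b2 [Hb1 [Hb2 ->]]]].
    rewrite perm.
    destruct (Hsplit b1 Hb1) as [c1 [c2 [Hc1 [Hc2 ->]]]].
    rewrite med. apply HBSB.
    exists (op c1 s), (op c2 b2). split.
    - exists c1, s. repeat split; auto.
    - split; [apply HBB; exists c2, b2; auto | reflexivity]. }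
  split.
  - intros x [s [b [_ [Hb ->]]]]. apply HSB; auto.
  - intros x [b [s [Hb [_ ->]]]].
    destruct (Hsplit b Hb) as [b1 [b2 [Hb1 [Hb2 ->]]]].
    rewrite hAG. apply HBB. exists (op s b2), b1. split; [apply HSB; auto | auto].
Qed.
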